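(* Let $m\ge 2$, $d\ge1$ be integers, $n=md$, $a,c>0$, $q=\frac{ad}{2c}+1$. Let $\Pi$ be the $n\times\binom m2$ matrix whose columns are the vectors $\sqrt{a/m}\,(e_{1+(i-1)d}-e_{1+(j-1)d})$, $1\le i<j\le m$; let $\Pi_R$ be the $m\times\binom m2$ submatrix of $\Pi$ formed by its rows $1+(k-1)d$, $k=1,\dots,m$; let $G_R$ be the $m\times m$ matrix with $(G_R)_{kl}=-\frac{d}{2cm}|k-l|(m-|k-l|)$; let $M_R=(G_R^{-1}+\Pi_R\Pi_R^\top)^{-1}$; and let $F=\Pi\Pi^\top-\Pi\Pi_R^\top M_R\Pi_R\Pi^\top$ ($n\times n$). Then for all $r,s\in\{1,\dots,m\}$, $F_{(r-1)d+1,\,(s-1)d+1}=f_{((s-r)\bmod m)+1}$, all other entries of $F$ are $0$, and $$f_i=a\,\delta_{i1}-\frac{a^2d}{2c}\,\frac{U_{i-2}(q)+U_{m-i}(q)}{T_m(q)-1},\qquad i=1,\dots,m.$$ That is, $F$ is the block Toeplitz (block circulant) matrix with block rows $(F_1,F_2,\dots,F_m)$, $(F_m,F_1,\dots,F_{m-1})$, …, where each $d\times d$ block $F_i$ has $(F_i)_{11}=f_i$ and all other entries zero.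
   Context: $e_j$ denotes the $j$-th standard basis vector of $\mathbb R^n$; $\delta_{i1}$ is the Kronecker delta. $T_k,U_k$ are the Chebyshev polynomials of the first and second kind ($T_0=1,T_1=x,U_0=1,U_1=2x$, recurrence $p_{k+1}=2xp_k-p_{k-1}$), with $U_{-1}=0$. *)

(* Defs.v *)
From HB Require Import structures.
From mathcomp Require Import all_boot all_order all_algebra.
Set Implicit Arguments. Unset Strict Implicit. Unset Printing Implicit Defensive.
Import Order.TTheory GRing.Theory Num.Theory.
Local Open Scope ring_scope.

Fixpoint chebT {R : nzRingType} (n : nat) (x : R) : R :=
  match n with
  | 0%N => 1
  | 1%N => x
  | (k.+1 as k').+1 => 2 * x * chebT k' x - chebT k x
  end.

Fixpoint chebU {R : nzRingType} (n : nat) (x : R) : R :=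
  match n with
  | 0%N => 1
  | 1%N => 2 * x
  | (k.+1 as k').+1 => 2 * x * chebU k' x - chebU k x
  end.

(* chebU_pred k x = U_{k-1}(x), with the convention U_{-1} = 0. *)
Definition chebU_pred {R : nzRingType} (k : nat) (x : R) : R :=
  if k is k'.+1 then chebU k' x else 0.

(* Column indices of Pi: pairs (i,j) of (0-based) indices in {0..m-1} with i < j.
   The columns of Pi are indexed by 'I_#|pairs m| (= binom(m,2)) through the
   enumeration enum_val. *)
Definition pairs (m : nat) := {p : 'I_m * 'I_m | (p.1 < p.2)%N}.

(* Entry of Pi at (0-based, nat) row index r and column index c:
   column c = sqrt(a/m) (e_{i d} - e_{j d}) in 0-based indexing,
   where (i,j) = enum_val c. *)
Definition pi_entry {R : rcfType} (m d : nat) (a : R) (r : nat)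
    (c : 'I_#|{: pairs m}|) : R :=
  let p := val (enum_val c) in
  Num.sqrt (a / m%:R) *
    ((r == (p.1 * d)%N)%:R - (r == (p.2 * d)%N)%:R).
Arguments pi_entry {R} m d a r c.

Definition Pi {R : rcfType} (m d : nat) (a : R) : 'M[R]_((m * d)%N, #|{: pairs m}|) :=
  \matrix_(r < (m * d)%N, c < #|{: pairs m}|) pi_entry m d a r c.

(* Pi_R : rows 1+(k-1)d (1-based), i.e. rows k*d (0-based), k < m, of Pi. *)
Definition Pi_R {R : rcfType} (m d : nat) (a : R) : 'M[R]_(m, #|{: pairs m}|) :=
  \matrix_(k < m, c < #|{: pairs m}|) pi_entry m d a (k * d) c.

Definition G_R {R : rcfType} (m d : nat) (c : R) : 'M[R]_m :=
  \matrix_(k < m, l < m)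
    let del := (maxn k l - minn k l)%N in
    - (d%:R / (2 * c * m%:R)) * del%:R * (m - del)%N%:R.

Definition M_R {R : rcfType} (m d : nat) (a c : R) : 'M[R]_m :=
  invmx (invmx (G_R m d c) + Pi_R m d a *m (Pi_R m d a)^T).

Definition Fmat {R : rcfType} (m d : nat) (a c : R) : 'M[R]_((m * d)%N) :=
  Pi m d a *m (Pi m d a)^T
  - Pi m d a *m (Pi_R m d a)^T *m M_R m d a c *m Pi_R m d a *m (Pi m d a)^T.

(* f_{k+1} (0-based k, i.e. k = i - 1):
   a delta_{i1} - a^2 d/(2c) (U_{i-2}(q) + U_{m-i}(q)) / (T_m(q) - 1). *)
Definition fval {R : rcfType} (m d : nat) (a c : R) (k : nat) : R :=
  let q := a * d%:R / (2 * c) + 1 in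
  a * (k == 0%N)%:R
  - a ^+ 2 * d%:R / (2 * c) *
      ((chebU_pred k q + chebU (m - k.+1) q) / (chebT m q - 1)).

(* Main.v *)
From HB Require Import structures.
From mathcomp Require Import all_boot all_order all_algebra.
Require Import Defs.
From mathcomp Require Import ring lra zify.
Import Order.TTheory GRing.Theory Num.Theory.
Local Open Scope ring_scope.
Set Implicit Arguments. Unset Strict Implicit. Unset Printing Implicit Defensive.

Definition circ (R : nzRingType) n (f : 'I_n.+1 -> R) : 'M[R]_n.+1 :=
  \matrix_(k, l) f (l - k).
Definition conv (R : nzRingType) n (f g : 'I_n.+1 -> R) (x : 'I_n.+1) : R :=
  \sum_y f y * g (x - y).

Lemma sum_shift (R : nzRingType) n (f : 'I_n.+1 -> R) t :
  \sum_x f (x - t) = \sum_x f x.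
Proof.
rewrite (reindex_inj (addIr t)) /=; apply: eq_bigr => x _; by rewrite addrK.
Qed.

Lemma sum_refl (R : nzRingType) n (f : 'I_n.+1 -> R) t :
  \sum_x f (t - x) = \sum_x f x.
Proof.
have inj : injective (fun x : 'I_n.+1 => t - x).
  by move=> x y /= /addrI /oppr_inj.
rewrite (reindex_inj inj) /=; apply: eq_bigr => x _.
by rewrite opprB addrC subrK.
Qed.

Lemma circ_mul (R : nzRingType) n (f g : 'I_n.+1 -> R) :
  circ f *m circ g = circ (conv f g).
Proof.
apply/matrixP => k l; rewrite !mxE /conv.
rewrite (reindex_inj (addIr k)) /=; apply: eq_bigr => y _.
rewrite !mxE addrK; congr (_ * g _).
by rewrite opprD addrA addrAC.
Qed.

Lemma conv_comm (R : comNzRingType) n (f g : 'I_n.+1 -> R) x :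
  conv f g x = conv g f x.
Proof.
rewrite /conv -(sum_refl _ x); apply: eq_bigr => y _.
by rewrite subKr mulrC.
Qed.

Lemma circ_eq (R : nzRingType) n (f g : 'I_n.+1 -> R) :
  f =1 g -> circ f = circ g.
Proof. by move=> e; apply/matrixP => k l; rewrite !mxE e. Qed.

Lemma circ_add (R : nzRingType) n (f g : 'I_n.+1 -> R) :
  circ f + circ g = circ (fun x => f x + g x).
Proof. by apply/matrixP => k l; rewrite !mxE. Qed.

Lemma circ_sub (R : nzRingType) n (f g : 'I_n.+1 -> R) :
  circ f - circ g = circ (fun x => f x - g x).
Proof. by apply/matrixP => k l; rewrite !mxE. Qed.

Lemma circ1 (R : nzRingType) n :
  1%:M = circ (fun x : 'I_n.+1 => (x == 0)%:R : R).
Proof. by apply/matrixP => k l; rewrite !mxE subr_eq0 eq_sym. Qed.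

Lemma circ_unit (R : comUnitRingType) n (f g : 'I_n.+1 -> R) :
  conv f g =1 (fun x => (x == 0)%:R) ->
  invmx (circ f) = circ g.
Proof.
move=> e.
have h : circ f *m circ g = 1%:M by rewrite circ_mul circ1; apply: circ_eq.
have [u _] := mulmx1_unit h.
by rewrite -[invmx _]mulmx1 -h mulmxA mulVmx // mul1mx.
Qed.

Lemma sum_ind (R : nzRingType) m (F : 'I_m -> R) (k : 'I_m) :
  \sum_i (k == i)%:R * F i = F k.
Proof.
rewrite (bigD1 k) //= eqxx mul1r big1 ?addr0 // => i /negbTE.
by rewrite eq_sym => ->; rewrite mul0r.
Qed.

Lemma sum_ind1 (R : nzRingType) m (k : 'I_m) :
  \sum_i (i == k)%:R = 1 :> R.
Proof.
rewrite (eq_bigr (fun i => (k == i)%:R * (fun _ => 1) i)) ?sum_ind // => i _.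
by rewrite mulr1 eq_sym.
Qed.

Lemma conv_basic_l (R : comNzRingType) n (g : 'I_n.+1 -> R) u w z t1 t2 t0 x :
  \sum_y (u * ((y == t1)%:R + (y == t2)%:R - 2 * (y == t0)%:R) + w * (y == t0)%:R + z) * g (x - y)
  = u * (g (x - t1) + g (x - t2) - 2 * g (x - t0)) + w * g (x - t0) + z * \sum_y g y.
Proof.
have sI : forall t : 'I_n.+1, \sum_y (y == t)%:R * g (x - y) = g (x - t).
  by move=> t; under eq_bigr do rewrite eq_sym; rewrite (sum_ind (fun y => g (x - y))).
under eq_bigr do rewrite mulrDl.
rewrite big_split /= -mulr_sumr (sum_refl g x).
under eq_bigr do rewrite !mulrDl mulrBr mulrDr !mulrBl !mulrDl -!mulrA.
rewrite big_split /= sumrB big_split /= -!mulr_sumr !sI.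
rewrite (eq_bigr (fun i => (i == t0)%:R * g (x - i) + (i == t0)%:R * g (x - i))); last by move=> i _; rewrite mul1r mulrDl.
rewrite big_split /= sI; ring.
Qed.

Lemma conv_basic_r (R : comNzRingType) n (f : 'I_n.+1 -> R) u z t1 t2 t0 x :
  \sum_y f y * (u * ((x - y == t1)%:R + (x - y == t2)%:R - 2 * (x - y == t0)%:R) + z)
  = u * (f (x - t1) + f (x - t2) - 2 * f (x - t0)) + z * \sum_y f y.
Proof.
rewrite -[LHS](sum_refl _ x).
rewrite (eq_bigr (fun y => (u * ((y == t1)%:R + (y == t2)%:R - 2 * (y == t0)%:R) + 0 * (y == t0)%:R + z) * f (x - y))); last first.
  by move=> y _; rewrite subKr mul0r addr0 mulrC.
by rewrite conv_basic_l mul0r addr0.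
Qed.
Lemma W_rec (R : nzRingType) (q : R) k :
  chebU_pred k.+2 q = 2 * q * chebU_pred k.+1 q - chebU_pred k q.
Proof. by case: k => [|k] //=; rewrite mulr1 subr0. Qed.

Lemma T_W (R : comNzRingType) (q : R) k :
  chebT k.+1 q = q * chebU_pred k.+1 q - chebU_pred k q.
Proof.
suff : chebT k.+1 q = q * chebU_pred k.+1 q - chebU_pred k q /\
       chebT k.+2 q = q * chebU_pred k.+2 q - chebU_pred k.+1 q by case.
elim: k => [|k [IH1 IH2]].
  by split => /=; ring.
split => //.
have -> : chebT k.+3 q = 2 * q * chebT k.+2 q - chebT k.+1 q by [].
rewrite IH1 IH2 (W_rec q k.+1) (W_rec q k); ring.
Qed.

Lemma T_gt (R : realFieldType) (q : R) : 1 < q ->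
  forall k, 1 <= chebT k q /\ chebT k q < chebT k.+1 q.
Proof.
move=> q1; elim=> [|k [IH1 IH2]].
  by rewrite /=; split => //.
have -> : chebT k.+2 q = 2 * q * chebT k.+1 q - chebT k q by case: k IH1 IH2.
split; first lra.
have h : 0 <= (q - 1) * chebT k.+1 q by apply: mulr_ge0; lra.
nra.
Qed.

Lemma val_sub1 n (x : 'I_n.+2) :
  val (x - inZp 1) = if val x == 0%N then n.+1 else (val x).-1.
Proof.
rewrite /= (modn_small (_ : 1 < n.+2)%N) // (modn_small (_ : n.+2 - 1 < n.+2)%N) //.
have xl := ltn_ord x.
case: eqP => [->|h]; first by rewrite add0n modn_small.
have -> : (x + (n.+2 - 1) = (x.-1) + n.+2)%N by lia.
by rewrite modnDr modn_small //; lia.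
Qed.

Lemma val_add1 n (x : 'I_n.+2) :
  val (x - - inZp 1) = if val x == n.+1 then 0%N else (val x).+1.
Proof.
rewrite opprK /= (modn_small (_ : 1 < n.+2)%N) //.
have xl := ltn_ord x.
case: eqP => [->|h]; first by rewrite addn1 modnn.
by rewrite modn_small //; lia.
Qed.

Definition psi (R : nzRingType) (q : R) M v := chebU_pred v q + chebU_pred (M - v) q.

Lemma chebU_psi (R : nzRingType) (q : R) M v : (v < M)%N ->
  chebU_pred v q + chebU (M - v.+1) q = psi q M v.
Proof. by move=> h; rewrite /psi -(subnSK h). Qed.

Lemma psi_step (R : comNzRingType) (q : R) n v : (1 <= v <= n.+1)%N ->
  psi q n.+2 v.-1 + psi q n.+2 v.+1 = 2 * q * psi q n.+2 v.
Proof.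
move=> /andP [h1 h2]; rewrite /psi.
have [j ej] : exists j, v = j.+1 by exists v.-1; lia.
have [k ek] : exists k, (n.+2 - v = k.+1)%N by exists (n.+2 - v).-1; lia.
have -> : (n.+2 - v.-1 = k.+2)%N by lia.
have -> : (n.+2 - v.+1 = k)%N by lia.
rewrite ek ej succnK (W_rec q j) (W_rec q k); ring.
Qed.

Lemma K_Cf (R : realFieldType) n (a c : R) (d : nat) (x : 'I_n.+2) :
  0 < a -> 0 < c -> (0 < d)%N ->
  let q := a * d%:R / (2 * c) + 1 in
  let Cf := fun x : 'I_n.+2 => d%:R / c * psi q n.+2 (val x) / (2 * (chebT n.+2 q - 1)) in
  \sum_y (-(c / d%:R) * ((y == inZp 1)%:R + (y == - inZp 1)%:R - 2 * (y == 0)%:R)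
          + a * (y == 0)%:R + 0) * Cf (x - y) = (x == 0)%:R.
Proof.
move=> a0 c0 d0 q Cf.
rewrite conv_basic_l mul0r addr0 subr0 /Cf val_sub1 val_add1.
have q1 : 1 < q.
  rewrite /q; have : 0 < a * d%:R / (2 * c) by rewrite !(mulr_gt0, invr_gt0) ?ltr0n //.
  lra.
have [T0 T1] := T_gt q1 n.+1.

have Tne : chebT n.+2 q - 1 != 0 by rewrite subr_eq0 gt_eqF //; lra.
have dne : d%:R != 0 :> R by rewrite pnatr_eq0 -lt0n.
have cne : c != 0 by rewrite gt_eqF.
case: eqP => [x0|xn0].
  have -> : x = 0 by apply/val_inj.
  rewrite (_ : val (0 : 'I_n.+2) = 0%N) // (_ : (0%N == n.+1) = false) // eqxx.
  rewrite /psi (_ : (n.+2 - n.+1 = 1)%N); last by lia.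
  rewrite subn0 (_ : (n.+2 - 1 = n.+1)%N); last by lia.
  rewrite (T_W q n.+1) in Tne *.
  have -> : chebU_pred 1 q = 1 by [].
  have -> : chebU_pred 0 q = 0 by [].
  move: Tne; set X := chebU_pred n.+2 q; set Y := chebU_pred n.+1 q => Tne.
  rewrite /q in Tne *; rewrite (_ : true%:R = 1 :> R) //; field.
  rewrite cne dne andbT /=.
  have E : 2 * c * ((a * d%:R / (2 * c) + 1) * X - Y - 1) =
           (a * d%:R + 2 * c) * X + - Y * (2 * c) + -1 * (2 * c).
    by field; rewrite cne.
  by rewrite -E mulf_neq0 // mulf_neq0 // pnatr_eq0.
have /andP [v1 v2] : (1 <= val x <= n.+1)%N.
  have hx : (val x < n.+2)%N := ltn_ord x; move/eqP: xn0 => xn0; lia.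
have hs : psi q n.+2 (val x).-1 + psi q n.+2 (if val x == n.+1 then 0%N else (val x).+1)
          = 2 * q * psi q n.+2 (val x).
  rewrite -psi_step ?v1 ?v2 //; congr (_ + _).
  case: eqP => // ->; rewrite /psi subn0 subnn add0r addr0 //.
have -> : (x == 0) = false.
  by apply/negbTE/eqP => h; apply: xn0; rewrite h.
move: hs; set P1 := psi q n.+2 (val x).-1; set P2 := psi q n.+2 (if _ then _ else _).
set P := psi q n.+2 (val x).
move=> hs; have -> : P2 = 2 * q * P - P1 by rewrite -hs; ring.
move: Tne; set T := chebT n.+2 q => Tne.
rewrite (_ : false%:R = 0 :> R) // /q; field.
by rewrite Tne dne cne.
Qed.

Lemma val_subZ n (k l : 'I_n.+1) :
  val (l - k) = if (k <= l)%N then (l - k)%N else (l + n.+1 - k)%N.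
Proof.
have kl := ltn_ord k; have ll := ltn_ord l.
rewrite /=; case: (posnP k) => [k0|kpos].
  by rewrite k0 subn0 modnn addn0 modn_small // subn0 leq0n.
rewrite (modn_small (_ : n.+1 - k < n.+1)%N); last by lia.
case: leqP => h.
  have -> : (l + (n.+1 - k) = (l - k) + n.+1)%N by lia.
  by rewrite modnDr modn_small //; lia.
by rewrite modn_small; lia.
Qed.

Definition Gf (R : rcfType) n d (c : R) (x : 'I_n.+1) : R :=
  - (d%:R / (2 * c * n.+1%:R)) * (val x)%:R * (n.+1 - val x)%N%:R.

Lemma G_circ (R : rcfType) n d (c : R) : G_R n.+1 d c = circ (Gf d c).
Proof.
apply/matrixP => k l; rewrite !mxE /Gf -!mulrA -!natrM; congr (_ * _%:R).
rewrite val_subZ.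
have kl := ltn_ord k; have ll := ltn_ord l.
case: leqP => h.
  by [].
have -> : (n.+1 - (l + n.+1 - k) = k - l)%N by lia.
have -> : (n.+1 - (k - l) = l + n.+1 - k)%N by lia.
by rewrite mulnC.
Qed.

Lemma Gf_le0 (R : rcfType) n d (c : R) (x : 'I_n.+1) : 0 < c -> Gf d c x <= 0.
Proof.
move=> c0; rewrite /Gf mulNr mulNr oppr_le0 -mulrA; apply: mulr_ge0.
  by rewrite !(mulr_ge0, invr_ge0, ltW c0) ?ler0n.
by rewrite mulr_ge0 ?ler0n.
Qed.

Lemma sumG_neg (R : rcfType) n d (c : R) : 0 < c -> (0 < d)%N ->
  \sum_(x : 'I_n.+2) Gf d c x < 0.
Proof.
move=> c0 d0; rewrite (bigD1 (inZp 1)) //=.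
have h1 : Gf d c (inZp 1 : 'I_n.+2) < 0.
  rewrite /Gf /= (modn_small (_ : 1 < n.+2)%N) // mulNr mulNr oppr_lt0.
  rewrite mulr_gt0 ?ltr0n ?subn_gt0 //.
  by rewrite !(mulr_gt0, invr_gt0) ?ltr0n.
have h2 : \sum_(i < n.+2 | i != inZp 1) Gf d c i <= 0.
  by apply: sumr_le0 => i _; apply: Gf_le0.
lra.
Qed.

Lemma GG_pt (R : rcfType) n d (c : R) (x : 'I_n.+2) : 0 < c -> (0 < d)%N ->
  \sum_(y : 'I_n.+2) Gf (n := n.+1) d c y * (-(c / d%:R) * ((x - y == inZp 1)%:R + (x - y == - inZp 1)%:R
      - 2 * (x - y == 0)%:R) + (n.+2%:R * \sum_(z : 'I_n.+2) Gf (n := n.+1) d c z)^-1) = (x == 0)%:R.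
Proof.
move=> c0 d0.
have sn := sumG_neg n c0 d0.
set s := \sum_z Gf d c z in sn *.
rewrite conv_basic_r -/s subr0 /Gf val_sub1 val_add1.
have sne : s != 0 by rewrite lt_eqF.
have dne : d%:R != 0 :> R by rewrite pnatr_eq0 -lt0n.
have cne : c != 0 by rewrite gt_eqF.
have Mne : n.+2%:R != 0 :> R by rewrite pnatr_eq0.
have hx : (val x < n.+2)%N := ltn_ord x.
case: eqP => [x0|xn0].
  have -> : x = 0 by apply/val_inj.
  rewrite (_ : val (0 : 'I_n.+2) = 0%N) // (_ : (0%N == n.+1) = false) // eqxx.
  rewrite (_ : (n.+2 - n.+1 = 1)%N); last by lia.
  rewrite subn0 (_ : (n.+2 - 1 = n.+1)%N); last by lia.
  rewrite (_ : true%:R = 1 :> R) //.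
  rewrite !mulrSr; field.
  by rewrite -!mulrSr sne cne dne Mne.
have [j ej] : exists j, val x = j.+1 by exists (val x).-1; move/eqP: xn0; lia.
have [k ek] : exists k, (n = j + k)%N by exists (n - j)%N; lia.
have -> : (x == 0) = false.
  by apply/negbTE/eqP => h; apply: xn0; rewrite h.
rewrite (_ : false%:R = 0 :> R) // ej /=.
case: eqP => [jn|jn].
  have jn2 : j = n by lia.
  rewrite jn2 subn0 (_ : (n.+2 - n = 2)%N); last by lia.
  rewrite (_ : (n.+2 - n.+1 = 1)%N); last by lia.
  rewrite !mulrSr; field.
  by rewrite -!mulrSr sne cne dne Mne.
rewrite (_ : (n.+2 - j = k.+2)%N); last by lia.
rewrite (_ : (n.+2 - j.+1 = k.+1)%N); last by lia.
rewrite (_ : (n.+2 - j.+2 = k)%N); last by lia.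
move: Mne; rewrite ek => Mne; rewrite !mulrSr natrD in Mne *; field.
by rewrite sne cne dne Mne.
Qed.

Lemma sum_ind1' (R : nzRingType) m (k : 'I_m) :
  \sum_i (k == i)%:R = 1 :> R.
Proof.
rewrite (eq_bigr (fun i => (k == i)%:R * (fun _ => 1) i)) ?sum_ind // => i _.
by rewrite mulr1.
Qed.

Lemma sum_ind_r (R : nzRingType) m (F : 'I_m -> R) (k : 'I_m) :
  \sum_i F i * (k == i)%:R = F k.
Proof.
rewrite (bigD1 k) //= eqxx mulr1 big1 ?addr0 // => i /negbTE.
by rewrite eq_sym => ->; rewrite mulr0.
Qed.

Lemma sum_lt_sym (R : nzRingType) m (g : 'I_m -> 'I_m -> R) :
  (forall i j, g i j = g j i) -> (forall i, g i i = 0) ->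
  \sum_i \sum_j g i j = 2 * \sum_(i : 'I_m) \sum_(j : 'I_m) (i < j)%N%:R * g i j.
Proof.
move=> gs g0.
have E : forall i j, g i j = (i < j)%N%:R * g i j + (j < i)%N%:R * g j i.
  move=> i j; rewrite (gs j i); case: (ltngtP i j) => [h|h|/val_inj ->].
  - by rewrite mul1r mul0r addr0.
  - by rewrite mul1r mul0r add0r.
  - by rewrite g0 !mulr0 addr0.
under eq_bigr do under eq_bigr do rewrite E.
under eq_bigr do rewrite big_split /=.
rewrite big_split /= [X in _ + X]exchange_big /=.
by rewrite mulr2n mulrDl mul1r.
Qed.

Lemma sum_pairs (R : rcfType) m (F : 'I_m -> 'I_m -> R) :
  \sum_(c < #|{: pairs m}|) F (val (enum_val c)).1 (val (enum_val c)).2 =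
  \sum_(i : 'I_m) \sum_(j : 'I_m) (i < j)%N%:R * F i j.
Proof.
rewrite -(big_enum_val (A := {: pairs m}) (fun p : pairs m => F (val p).1 (val p).2)).
rewrite /=.
rewrite -(@big_sub _ _ _ _ (fun p : 'I_m * 'I_m => (p.1 < p.2)%N) (fun p => F p.1 p.2)).
rewrite big_mkcond pair_bigA /=.
apply: eq_bigr => -[i j] _ /=.
by rewrite unfold_in /=; case: (i < j)%N; rewrite ?mul1r ?mul0r.
Qed.

Lemma LR_entry (R : rcfType) m d (a : R) (k l : 'I_m) :
  (0 < m)%N -> (0 < d)%N -> 0 < a ->
  (Pi_R m d a *m (Pi_R m d a)^T) k l = a * ((k == l)%:R - m%:R^-1).
Proof.
move=> m0 d0 a0.
rewrite !mxE.
have ee : forall (x y : 'I_m), ((x * d)%N == (y * d)%N) = (x == y).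
  by move=> x y; rewrite eqn_pmul2r.
set e := fun x y : 'I_m => (x == y)%:R : R.
set g := fun i j : 'I_m => (e k i - e k j) * (e l i - e l j).
transitivity (a / m%:R * \sum_(i : 'I_m) \sum_(j : 'I_m) (i < j)%N%:R * g i j).
  rewrite -sum_pairs mulr_sumr; apply: eq_bigr => c _.
  rewrite !mxE /pi_entry !ee mulrACA -expr2 sqr_sqrtr ?divr_ge0 ?ler0n ?ltW //.
have -> : \sum_(i : 'I_m) \sum_(j : 'I_m) (i < j)%N%:R * g i j =
          (\sum_i \sum_j g i j) / 2.
  rewrite (@sum_lt_sym _ _ g).
  - by rewrite mulrC mulrA mulVf ?mul1r ?pnatr_eq0.
  - by move=> i j; rewrite /g -[e k j - e k i]opprB -[e l j - e l i]opprB mulrNN.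
  - by move=> i; rewrite /g !subrr mulr0.
have Ej : forall i, \sum_j g i j = m%:R * (e k i * e l i) - e k i - e l i + e k l.
  move=> i; rewrite /g.
  under eq_bigr do rewrite mulrBl !mulrBr.
  rewrite !sumrB /= /e sumr_const card_ord.
  rewrite (@sum_ind_r _ _ (fun _ => (k == i)%:R)) (@sum_ind _ _ (fun _ => (l == i)%:R)) sum_ind.
  rewrite [(l == k)]eq_sym mulr_natl; lra.
rewrite (eq_bigr _ (fun i _ => Ej i)) big_split /= !sumrB -mulr_sumr sumr_const card_ord /e.
rewrite sum_ind !sum_ind1' eq_sym.
have mne : m%:R != 0 :> R by rewrite pnatr_eq0 -lt0n.
field.
by rewrite mne.
Qed.

Definition Psel (R : rcfType) m d : 'M[R]_((m * d)%N, m) :=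
  \matrix_(i, k) ((val i == k * d)%N)%:R.

Lemma Pi_fact (R : rcfType) m d (a : R) : (0 < d)%N ->
  Pi m d a = Psel R m d *m Pi_R m d a.
Proof.
move=> d0; apply/matrixP => i c; rewrite !mxE.
have [dvd|ndvd] := boolP (d %| i)%N.
  have rlt : (i %/ d < m)%N by rewrite ltn_divLR // -mulnC ltn_ord.
  rewrite (bigD1 (Ordinal rlt)) //= mxE divnK // eqxx mul1r big1 ?addr0.
    by rewrite mxE divnK.
  move=> k kn; rewrite mxE.
  have -> : (val i == k * d)%N = false.
    apply/negbTE; apply: contra kn => /eqP e; apply/eqP/val_inj => /=.
    by rewrite e mulnK.
  by rewrite mul0r.
rewrite big1; last first.
  move=> k _; rewrite mxE.
  have -> : (val i == k * d)%N = false.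
    by apply/negbTE; apply: contra ndvd => /eqP ->; rewrite dvdn_mull.
  by rewrite mul0r.
rewrite /pi_entry.
have H : forall x : 'I_m, (val i == x * d)%N = false.
  by move=> x; apply/negbTE; apply: contra ndvd => /eqP ->; rewrite dvdn_mull.
by rewrite !H subrr mulr0.
Qed.

Lemma Fmat_fact (R : rcfType) m d (a c : R) : (0 < d)%N ->
  Fmat m d a c = Psel R m d *m
    (Pi_R m d a *m (Pi_R m d a)^T -
     Pi_R m d a *m (Pi_R m d a)^T *m M_R m d a c *m (Pi_R m d a *m (Pi_R m d a)^T))
    *m (Psel R m d)^T.
Proof.
move=> d0; rewrite /Fmat Pi_fact // trmx_mul.
by rewrite mulmxBr mulmxBl !mulmxA.
Qed.

Lemma Psel_row (R : rcfType) m d (k : 'I_m) (i : 'I_(m * d)) (r : 'I_m) :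
  (0 < d)%N -> val i = (r * d)%N -> Psel R m d i k = (r == k)%:R.
Proof.
move=> d0 e; rewrite mxE e eqn_pmul2r //.
Qed.

Lemma Psel_row0 (R : rcfType) m d (i : 'I_(m * d)) (k : 'I_m) :
  ~~ (d %| i)%N -> Psel R m d i k = 0.
Proof.
move=> nd; rewrite mxE.
have -> // : (val i == k * d)%N = false.
by apply/negbTE; apply: contra nd => /eqP ->; rewrite dvdn_mull.
Qed.

Lemma PZP_entry (R : rcfType) m d (Z : 'M[R]_m) i j :
  (Psel R m d *m Z *m (Psel R m d)^T) i j =
  \sum_k \sum_l Psel R m d i k * Z k l * Psel R m d j l.
Proof.
rewrite mxE; under eq_bigr do rewrite !mxE big_distrl /=.
rewrite exchange_big; apply: eq_bigr => k _; apply: eq_bigr => l _.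
by rewrite [Psel R m d j l]mxE.
Qed.

Lemma PZP_rs (R : rcfType) m d (Z : 'M[R]_m) i j (r s : 'I_m) :
  (0 < d)%N -> val i = (r * d)%N -> val j = (s * d)%N ->
  (Psel R m d *m Z *m (Psel R m d)^T) i j = Z r s.
Proof.
move=> d0 ei ej; rewrite PZP_entry.
under eq_bigr do under eq_bigr do rewrite (@Psel_row _ _ _ _ _ _ d0 ei) (@Psel_row _ _ _ _ _ _ d0 ej) -mulrA.
under eq_bigr do rewrite -mulr_sumr sum_ind_r.
by rewrite sum_ind.
Qed.

Lemma PZP_0 (R : rcfType) m d (Z : 'M[R]_m) (i j : 'I_(m * d)) :
  ~~ ((d %| i) && (d %| j))%N ->
  (Psel R m d *m Z *m (Psel R m d)^T) i j = 0.
Proof.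
rewrite negb_and => /orP [h|h]; rewrite PZP_entry big1 // => k _; rewrite big1 // => l _.
  by rewrite Psel_row0 // !mul0r.
by rewrite (@Psel_row0 _ _ _ _ _ h) mulr0.
Qed.

Lemma conv_Lr (R : comUnitRingType) n (f : 'I_n.+1 -> R) (a : R) x :
  \sum_y f y * (a * ((x - y == 0)%:R - (n.+1%:R)^-1)) =
  a * f x - a / n.+1%:R * \sum_y f y.
Proof.
rewrite -[LHS](sum_refl _ x).
rewrite (eq_bigr (fun y => (0 == y)%:R * (a * f (x - y)) - a / n.+1%:R * f (x - y))); last first.
  by move=> y _; rewrite subKr eq_sym; ring.
by rewrite sumrB sum_ind subr0 -mulr_sumr (sum_refl f x).
Qed.

Unset Implicit Arguments.

Theorem lemma4p3 (R : rcfType) (m d : nat) (a c : R) :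
  (2 <= m)%N -> (1 <= d)%N -> 0 < a -> 0 < c ->
  (forall (r s : 'I_m) (i j : 'I_((m * d)%N)),
      val i = (r * d)%N -> val j = (s * d)%N ->
      Fmat m d a c i j = fval m d a c ((s + m - r) %% m)%N) /\
  (forall (i j : 'I_((m * d)%N)),
      ~~ ((d %| i) && (d %| j))%N -> Fmat m d a c i j = 0).
Proof.
move=> m2 d0 a0 c0.
case: m m2 => [|[|n]] // _.
pose M := n.+2.
pose q := a * d%:R / (2 * c) + 1.
pose T := chebT n.+2 q.
pose Cf := fun x : 'I_n.+2 => d%:R / c * psi q n.+2 (val x) / (2 * (T - 1)).
pose s := \sum_(z : 'I_n.+2) Gf (n := n.+1) d c z.
pose t1 : 'I_n.+2 := inZp 1.
pose Gif := fun z : 'I_n.+2 => -(c / d%:R) * ((z == t1)%:R + (z == - t1)%:R - 2 * (z == 0)%:R) + (n.+2%:R * s)^-1.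
pose Lf := fun z : 'I_n.+2 => a * ((z == 0)%:R - (n.+2%:R)^-1).
pose gam := (n.+2%:R * s)^-1 - a / n.+2%:R.
pose bet := - (gam / a) / (a + gam * n.+2%:R).
pose Xf := fun z : 'I_n.+2 => Cf z + bet.
pose Zf := fun z : 'I_n.+2 => a * (z == 0)%:R - a ^+ 2 * Cf z.
have LE : Pi_R n.+2 d a *m (Pi_R n.+2 d a)^T = circ Lf.
  by apply/matrixP => k l; rewrite LR_entry // mxE /Lf subr_eq0 eq_sym.
have GE : invmx (G_R n.+2 d c) = circ Gif.
  by rewrite G_circ; apply: circ_unit => x; rewrite /conv; apply: GG_pt.
have sn : s < 0 by apply: sumG_neg.
have sne : s != 0 by rewrite lt_eqF.
have ane : a != 0 by rewrite gt_eqF.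
have Mne : n.+2%:R != 0 :> R by rewrite pnatr_eq0.
pose Kf := fun y : 'I_n.+2 => -(c / d%:R) * ((y == t1)%:R + (y == - t1)%:R - 2 * (y == 0)%:R)
          + a * (y == 0)%:R + 0.
have Kpt : forall x, \sum_y Kf y * Cf (x - y) = (x == 0)%:R.
  by move=> x; apply: K_Cf.
have sumK : \sum_y Kf y = a.
  have := conv_basic_l (fun _ => 1 : R) (-(c / d%:R)) a 0 t1 (- t1) 0 (0 : 'I_n.+2).
  rewrite (eq_bigr Kf); last by move=> y _; rewrite mulr1.
  by move=> ->; ring.
have sumC : \sum_y Cf y = a^-1.
  have : \sum_(x : 'I_n.+2) \sum_y Kf y * Cf (x - y) = 1.
    by under eq_bigr do rewrite Kpt; rewrite sum_ind1.
  rewrite exchange_big /=.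
  under eq_bigr do rewrite -mulr_sumr (sum_shift Cf).
  rewrite -mulr_suml sumK => h.
  by apply: (mulfI ane); rewrite h mulfV.
have Kpt2 : forall x, -(c / d%:R) * (Cf (x - t1) + Cf (x - - t1) - 2 * Cf x) + a * Cf x = (x == 0)%:R.
  move=> x; rewrite -(Kpt x) /Kf conv_basic_l subr0; ring.
have abet : a + gam * n.+2%:R = s^-1.
  by rewrite /gam; field; rewrite sne -natrD pnatr_eq0 add2n.
have ME : M_R n.+2 d a c = circ Xf.
  rewrite /M_R GE LE circ_add; apply: circ_unit => x; rewrite /conv.
  rewrite (eq_bigr (fun y => (-(c / d%:R) * ((y == t1)%:R + (y == - t1)%:R - 2 * (y == 0)%:R)
          + a * (y == 0)%:R + gam) * Xf (x - y))); last first.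
    by move=> y _; rewrite /Gif /Lf /gam; ring.
  rewrite conv_basic_l /Xf subr0 big_split /= sumC sumr_const card_ord -(Kpt2 x).
  have ene : a + gam * n.+2%:R != 0 by rewrite abet invr_neq0.
  rewrite /bet -mulr_natr; field.
  have dne : d%:R != 0 :> R by rewrite pnatr_eq0 -lt0n.
  by rewrite dne ane andbT -[2 + _](natrD _ 2 n) add2n.
have CL : forall y, conv Lf Xf y = a * Xf y - a / n.+2%:R * \sum_z Xf z.
  by move=> y; rewrite conv_comm /conv /Lf conv_Lr.
have SX : \sum_z Xf z = a^-1 + bet * n.+2%:R.
  by rewrite /Xf big_split /= sumC sumr_const card_ord mulr_natr.
have ZE : Pi_R n.+2 d a *m (Pi_R n.+2 d a)^T -
     Pi_R n.+2 d a *m (Pi_R n.+2 d a)^T *m M_R n.+2 d a c *m (Pi_R n.+2 d a *m (Pi_R n.+2 d a)^T)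
     = circ Zf.
  rewrite LE ME !circ_mul circ_sub; apply: circ_eq => x.
  rewrite [conv (conv _ _) _ x]/conv (conv_Lr (conv Lf Xf) a x) CL.
  have SL : \sum_y conv Lf Xf y = 0.
    rewrite (eq_bigr _ (fun y _ => CL y)) sumrB -mulr_sumr sumr_const card_ord SX -mulr_natr.
    field; by rewrite ane -[2 + _](natrD _ 2 n) add2n.
  rewrite SL SX /Zf /Xf /Lf.
  field.
  by rewrite ane -[2 + _](natrD _ 2 n) add2n andbT.
have q1 : 1 < q.
  rewrite /q; have : 0 < a * d%:R / (2 * c) by rewrite !(mulr_gt0, invr_gt0) ?ltr0n.
  lra.
have [T0 T1] := T_gt q1 n.+1.
have Tne : T - 1 != 0 by rewrite subr_eq0 gt_eqF //; rewrite /T; lra.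
have cne : c != 0 by rewrite gt_eqF.
split.
  move=> r s0 i j ei ej.
  rewrite Fmat_fact // (PZP_rs _ d0 ei ej) ZE mxE /Zf /Cf /fval.
  have vx : val (s0 - r) = ((s0 + n.+2 - r) %% n.+2)%N.
    rewrite /= modnDmr addnBA //; exact: ltnW.
  rewrite -vx (chebU_psi _ (ltn_ord (s0 - r))) -/q -/T.
  have -> : (s0 - r == 0) = (val (s0 - r) == 0%N) by [].
  field.
  by rewrite Tne cne.
move=> i j h.
by rewrite Fmat_fact // PZP_0.
Qed.
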